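(* Let $P:\{-1,1\}^k\to\{0,1\}$ be a predicate and $Q:\{-1,1\}^k\to\mathbb{R}$. Then $P$ is information-theoretically useless for $Q$ if and only if there exists a probability measure $\mu$ on $\{-1,1\}^k$ supported on $P^{-1}(1)$ such that $\mathrm{Opt}(Q,\mu)=E_Q$.
   Context: Boolean values are encoded as $\pm1$. An instance of Max-$P$ on variables $x_1,\dots,x_n$ consists of $m$ constraints; constraint $j$ is given by indices $a_j^1,\dots,a_j^k\in[n]$, pairwise distinct within the constraint, and signs $b_j^1,\dots,b_j^k\in\{-1,1\}$. For $x\in\{-1,1\}^n$, $x_{a_j}^{b_j}\in\{-1,1\}^k$ denotes the string with $i$-th coordinate $b_j^i x_{a_j^i}$. $E_Q=\mathbb{E}_{x\in\{-1,1\}^k}[Q(x)]$ for uniform $x$. $P$ is information-theoretically useless for $Q$ if for every $\epsilon>0$ there is an instance with $\max_x\frac1m\sum_j P(x_{a_j}^{b_j})=1$ and $\max_x\frac1m\sum_j Q(x_{a_j}^{b_j})\le E_Q+\epsilon$. For a probability measure $\mu$ on $\{-1,1\}^k$ and $p\in[0,1]$, $\mu^p$ is the distribution obtained by sampling a string from $\mu$ and then independently flipping each coordinate with probability $p$. $\mathrm{Opt}(Q,\mu)=\max_{p\in[0,1]}\mathbb{E}_{x\sim\mu^p}[Q(x)]$. *)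

(* Defs.v *)
From mathcomp Require Import all_boot all_order all_algebra.
From mathcomp Require Import reals.
Set Implicit Arguments. Unset Strict Implicit. Unset Printing Implicit Defensive.
Import Order.TTheory GRing.Theory Num.Theory.
Local Open Scope ring_scope.

(* Boolean values +-1 are encoded as bool: false = +1, true = -1.
   Multiplication of +-1 values is then xor (addb). *)
Definition bstr (k : nat) := {ffun 'I_k -> bool}.

Definition lit (k n : nat) (a : 'I_k -> 'I_n) (b : 'I_k -> bool)
  (x : {ffun 'I_n -> bool}) : bstr k := [ffun i => b i (+) x (a i)].

Definition frac_val (R : realType) (k n m : nat) (F : bstr k -> R)
  (a : 'I_m -> 'I_k -> 'I_n) (b : 'I_m -> 'I_k -> bool)
  (x : {ffun 'I_n -> bool}) : R :=
  (m%:R)^-1 * \sum_(j < m) F (lit (a j) (b j) x).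

Definition is_max_fin (R : realType) (T : finType) (f : T -> R) (v : R) : Prop :=
  (exists x, f x = v) /\ (forall x, f x <= v).

Definition EQ (R : realType) (k : nat) (Q : bstr k -> R) : R :=
  (2 ^ k)%:R^-1 * \sum_(x : bstr k) Q x.

Definition useless (R : realType) (k : nat) (P : bstr k -> bool) (Q : bstr k -> R) : Prop :=
  forall eps : R, 0 < eps ->
  exists (n m : nat) (a : 'I_m -> 'I_k -> 'I_n) (b : 'I_m -> 'I_k -> bool),
    [/\ (0 < m)%N,
        (forall j, injective (a j)),
        is_max_fin (frac_val (fun s => (P s)%:R : R) a b) 1
      & exists v, is_max_fin (frac_val Q a b) v /\ v <= EQ Q + eps].

Definition prob_on (R : realType) (k : nat) (P : bstr k -> bool) (mu : bstr k -> R) : Prop :=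
  [/\ forall x, 0 <= mu x, \sum_(x : bstr k) mu x = 1 & forall x, mu x != 0 -> P x].

(* mu^p: sample from mu, flip each coordinate independently with probability p *)
Definition noisy (R : realType) (k : nat) (mu : bstr k -> R) (p : R) (y : bstr k) : R :=
  \sum_(x : bstr k) mu x * \prod_(i < k) (if x i == y i then 1 - p else p).

Definition E_noisy (R : realType) (k : nat) (Q : bstr k -> R) (mu : bstr k -> R) (p : R) : R :=
  \sum_(y : bstr k) noisy mu p y * Q y.

Definition Opt_is (R : realType) (k : nat) (Q : bstr k -> R) (mu : bstr k -> R) (v : R) : Prop :=
  (exists p, 0 <= p <= 1 /\ E_noisy Q mu p = v) /\
  (forall p, 0 <= p <= 1 -> E_noisy Q mu p <= v).

(* Main.v *)
Require Import Defs.
From mathcomp Require Import all_boot all_order all_algebra.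
From mathcomp Require Import reals.
From mathcomp Require Import all_classical all_reals all_analysis.
From mathcomp Require Import ring lra.
Import Order.TTheory GRing.Theory Num.Theory.
Local Open Scope ring_scope.
Set Implicit Arguments. Unset Strict Implicit. Unset Printing Implicit Defensive.

Definition Kp (R : realType) (k : nat) (p : R) (s y : bstr k) : R :=
  \prod_(i < k) (if s i == y i then 1 - p else p).

Definition Gs (R : realType) k (Q : bstr k -> R) (p : R) (s : bstr k) : R :=
  \sum_(y : bstr k) Kp p s y * Q y.

Lemma sum_prod_ffun (R : realType) k (J : finType) (F : 'I_k -> J -> R) :
  \sum_(f : {ffun 'I_k -> J}) \prod_i F i (f i) = \prod_i \sum_j F i j.
Proof. by rewrite bigA_distr_bigA. Qed.

Lemma Kp_sum1 (R : realType) k (p : R) (s : bstr k) : \sum_y Kp p s y = 1.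
Proof.
rewrite /Kp (sum_prod_ffun (fun i b => if s i == b then 1 - p else p)).
rewrite big1 // => i _; rewrite big_bool; case: (s i) => /=; by rewrite ?subrK // addrC subrK.
Qed.

Lemma Kp_ge0 (R : realType) k (p : R) (s y : bstr k) : 0 <= p <= 1 -> 0 <= Kp p s y.
Proof.
move=> /andP[p0 p1]; apply: prodr_ge0 => i _; case: ifP => // _; by rewrite subr_ge0.
Qed.

Lemma Kp_le1 (R : realType) k (p : R) (s y : bstr k) : 0 <= p <= 1 -> Kp p s y <= 1.
Proof.
move=> /andP[p0 p1]; apply: prodr_ile1 => i _; case: ifP => _.
  by rewrite subr_ge0 p1 /= lerBlDr lerDl.
by rewrite p0 p1.
Qed.

Lemma Kp_half (R : realType) k (s y : bstr k) : Kp (2^-1 : R) s y = (2 ^ k)%:R^-1.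
Proof.
have -> : Kp (2^-1 : R) s y = \prod_(i < k) (2^-1 : R).
  apply: eq_bigr => i _; case: ifP => // _.
  by rewrite [X in X - _](splitr 1) mul1r addrK.
by rewrite prodr_const card_ord natrX exprVn.
Qed.

Lemma E_noisyE (R : realType) k (Q : bstr k -> R) (mu : bstr k -> R) p :
  E_noisy Q mu p = \sum_s mu s * Gs Q p s.
Proof.
rewrite /E_noisy /noisy /Gs.
under eq_bigr do rewrite mulr_suml.
rewrite exchange_big /=; apply: eq_bigr => s _; rewrite mulr_sumr.
by apply: eq_bigr => y _; rewrite mulrA.
Qed.

Lemma Gs_abs (R : realType) k (Q : bstr k -> R) p s : 0 <= p <= 1 ->
  `|Gs Q p s| <= \sum_y `|Q y|.
Proof.
move=> hp; rewrite /Gs; apply: le_trans (ler_norm_sum _ _ _) _.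
apply: ler_sum => y _; rewrite normrM ger0_norm ?Kp_ge0 //.
by rewrite ler_piMl ?normr_ge0 ?Kp_le1.
Qed.

Lemma Opt_half (R : realType) k (Q : bstr k -> R) (mu : bstr k -> R) :
  \sum_x mu x = 1 -> E_noisy Q mu 2^-1 = EQ Q.
Proof.
move=> h1; rewrite /E_noisy /noisy /EQ mulr_sumr; apply: eq_bigr => y _.
under eq_bigr do rewrite -/(Kp _ _ _) Kp_half.
by rewrite -mulr_suml h1 mul1r.
Qed.

Lemma sum_ind (R : realType) (T : finType) (z : T) (F : T -> R) :
  \sum_y (z == y)%:R * F y = F z.
Proof.
rewrite (bigD1 z) //= eqxx mul1r big1 ?addr0 // => y hy.
by rewrite eq_sym (negPf hy) mul0r.
Qed.

Lemma eq_ind_prod (R : realType) k (f g : {ffun 'I_k -> bool}) :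
  (f == g)%:R = \prod_i (f i == g i)%:R :> R.
Proof.
case: eqP => [->|neq]; first by rewrite big1 // => i _; rewrite eqxx.
case: (pickP (fun i => f i != g i)) => [i hi|h].
  by rewrite (bigD1 i) //= (negPf hi) mul0r.
exfalso; apply: neq; apply/ffunP => i; by move: (h i) => /negbFE/eqP.
Qed.

Lemma count_bits (R : realType) n (x : {ffun 'I_n -> bool}) (c t : bool) :
  \sum_(v < n) (c (+) x v == t)%:R =
  (if c == t then n%:R - \sum_v (x v)%:R else \sum_v (x v)%:R) :> R.
Proof.
have h1 : \sum_(v < n) (~~ x v)%:R = n%:R - \sum_v (x v)%:R :> R.
  have -> : n%:R = \sum_(v < n) (1 : R) by rewrite sumr_const card_ord.
  rewrite -sumrB; apply: eq_bigr => v _.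
  by case: (x v) => /=; rewrite ?subrr ?subr0.
case: c; case: t => /=; rewrite -?h1; apply: eq_bigr => v _; by case: (x v).
Qed.

Lemma sum_all_tuples (R : realType) k n (Q : bstr k -> R) (s : bstr k)
  (x : {ffun 'I_n -> bool}) : (0 < n)%N ->
  \sum_(a : {ffun 'I_k -> 'I_n}) Q (lit a s x) =
  n%:R ^+ k * Gs Q (n%:R^-1 * \sum_v (x v)%:R) s.
Proof.
move=> n0.
have n0' : n%:R != 0 :> R by rewrite pnatr_eq0 -lt0n.
transitivity (\sum_(y : bstr k) Q y * \sum_(a : {ffun 'I_k -> 'I_n})
     \prod_i (s i (+) x (a i) == y i)%:R).
  symmetry; under eq_bigr do rewrite mulr_sumr.
  rewrite exchange_big /=; apply: eq_bigr => a _.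
  rewrite -(sum_ind (lit a s x) Q); apply: eq_bigr => y _.
  rewrite mulrC eq_ind_prod; congr (_ * _); apply: eq_bigr => i _.
  by rewrite /lit ffunE.
rewrite /Gs mulr_sumr; apply: eq_bigr => y _.
rewrite (sum_prod_ffun (fun i v => (s i (+) x v == y i)%:R)).
rewrite mulrC mulrA; congr (_ * _).
have -> : n%:R ^+ k = \prod_(i < k) (n%:R : R) by rewrite prodr_const card_ord.
rewrite /Kp -big_split /=.
apply: eq_bigr => i _; rewrite count_bits; case: ifP => _.
  by rewrite mulrBr mulr1 mulrA mulfV // mul1r.
by rewrite mulrA mulfV // mul1r.
Qed.

Lemma prod_lb (R : realType) k (a : 'I_k -> R) : (forall i, 0 <= a i <= 1) ->
  1 - \sum_i a i <= \prod_i (1 - a i).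
Proof.
elim: k a => [|k IH] a ha; first by rewrite !big_ord0 subr0.
rewrite big_ord_recr big_ord_recr /=.
set S := \sum_(i < k) _; set P := \prod_(i < k) _; set c := a ord_max.
have h1 : 1 - S <= P by apply: IH.
have /andP[c0 c1] : 0 <= c <= 1 by apply: ha.
have S0 : 0 <= S by apply: sumr_ge0 => i _; case/andP: (ha (widen_ord (leqnSn k) i)).
have P0 : 0 <= P by apply: prodr_ge0 => i _; case/andP: (ha (widen_ord (leqnSn k) i)) => _; rewrite subr_ge0.
nra.
Qed.

Lemma real_lemma (R : realType) (X D N G B I r : R) : 0 < I -> I <= N ->
  X + D = N * G -> `|X| <= B * I -> `|D| <= B * (N - I) -> 1 - I / N <= r ->
  X <= I * (G + 2 * B * r).
Proof.
move=> I0 IN hXD hX hD hr.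
have N0 : 0 < N by apply: lt_le_trans IN.
have B0 : 0 <= B by rewrite -(pmulr_lge0 _ I0); apply: le_trans hX.
have hG : G = (X + D) / N by rewrite hXD mulrC mulKf // gt_eqF.
have hD2 : - D <= B * (N - I) by apply: le_trans (ler_norm (- D)) _; rewrite normrN.
have hX2 : X <= B * I by apply: le_trans (ler_norm X) hX.
have e1 : X - I * G = (X * (N - I) - I * D) / N.
  rewrite hG; field; by rewrite gt_eqF.
have e2 : (X * (N - I) - I * D) / N <= 2 * B * I * (1 - I / N).
  rewrite ler_pdivrMr //.
  have -> : 2 * B * I * (1 - I / N) * N = 2 * B * I * (N - I) by field; rewrite gt_eqF.
  have : X * (N - I) <= B * I * (N - I) by apply: ler_wpM2r; rewrite ?subr_ge0.
  have : - D * I <= B * (N - I) * I by apply: ler_wpM2r => //; apply: ltW.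
  nra.
have e3 : 2 * B * I * (1 - I / N) <= 2 * B * I * r.
  by apply: ler_wpM2l => //; rewrite !mulr_ge0 // ltW.
have := le_trans e2 e3; rewrite -e1; nra.
Qed.

Lemma card_inj (R : realType) k n :
  \sum_(a : {ffun 'I_k -> 'I_n} | injectiveb a) (1 : R) = (n ^_ k)%:R.
Proof.
rewrite (eq_bigl (mem [set f : {ffun 'I_k -> 'I_n} | injectiveb f])); last first.
  move=> a /=. rewrite inE. done.
by rewrite sumr_const card_inj_ffuns !card_ord.
Qed.

Lemma card_all (R : realType) k n :
  \sum_(a : {ffun 'I_k -> 'I_n}) (1 : R) = n%:R ^+ k.
Proof. by rewrite sumr_const card_ffun !card_ord natrX. Qed.

Lemma inj_ratio (R : realType) k n : (0 < n)%N -> (k <= n)%N ->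
  1 - (n ^_ k)%:R / (n%:R ^+ k) <= (k * k)%:R / n%:R :> R.
Proof.
move=> n0 kn.
have n0' : (0 : R) < n%:R by rewrite ltr0n.
have -> : (n ^_ k)%:R / (n%:R ^+ k) = \prod_(i < k) (1 - i%:R / n%:R) :> R.
  have -> : n%:R ^+ k = \prod_(i < k) (n%:R : R) by rewrite prodr_const card_ord.
  rewrite ffact_prod natr_prod -prodf_div.
  apply: eq_bigr => i _; rewrite natrB; last by apply: leq_trans (ltnW (ltn_ord i)) kn.
  by rewrite mulrBl mulfV // gt_eqF.
apply: le_trans (_ : \sum_(i < k) i%:R / n%:R <= _).
  suff : 1 - \sum_(i < k) i%:R / n%:R <= \prod_(i < k) (1 - i%:R / n%:R :> R) by lra.
  apply: prod_lb => i.
  apply/andP; split; first by rewrite divr_ge0 // ltW.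
  rewrite ler_pdivrMr // mul1r ler_nat.
  by apply: leq_trans (ltnW (ltn_ord i)) kn.
apply: le_trans (_ : \sum_(i < k) k%:R / n%:R <= _).
  apply: ler_sum => i _; rewrite ler_pM2r ?invr_gt0 // ler_nat; exact: ltnW.
by rewrite sumr_const card_ord natrM mulrAC mulr_natr.
Qed.

Lemma term_le_sum (R : realType) (T : finType) (F : T -> R) z :
  (forall y, 0 <= F y) -> F z <= \sum_y F y.
Proof.
move=> h; rewrite (bigD1 z) //= lerDl; exact: sumr_ge0.
Qed.

Lemma inj_bound (R : realType) k n (Q : bstr k -> R) (s : bstr k)
  (x : {ffun 'I_n -> bool}) : (0 < n)%N -> (k <= n)%N ->
  \sum_(a : {ffun 'I_k -> 'I_n} | injectiveb a) Q (lit a s x) <=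
  (n ^_ k)%:R * (Gs Q (n%:R^-1 * \sum_v (x v)%:R) s +
     2 * (\sum_y `|Q y|) * ((k * k)%:R / n%:R)).
Proof.
move=> n0 kn.
set B := \sum_y `|Q y|.
have hB z : `|Q z| <= B by apply: term_le_sum.
have hsplit : \sum_(a : {ffun 'I_k -> 'I_n}) Q (lit a s x) =
   \sum_(a : {ffun 'I_k -> 'I_n} | injectiveb a) Q (lit a s x) + \sum_(a : {ffun 'I_k -> 'I_n} | ~~ injectiveb a) Q (lit a s x).
  by rewrite (bigID (fun a : {ffun 'I_k -> 'I_n} => injectiveb a)).
have h1 : n%:R ^+ k = (n ^_ k)%:R + \sum_(a : {ffun 'I_k -> 'I_n} | ~~ injectiveb a) (1 : R).
  by rewrite -card_all -card_inj (bigID (fun a : {ffun 'I_k -> 'I_n} => injectiveb a)).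
apply: (@real_lemma R _ (\sum_(a : {ffun 'I_k -> 'I_n} | ~~ injectiveb a) Q (lit a s x)) (n%:R ^+ k) _ B (n ^_ k)%:R ((k * k)%:R / n%:R)).
- by rewrite ltr0n ffact_gt0.
- rewrite h1 lerDl; exact: sumr_ge0.
- by rewrite -hsplit sum_all_tuples.
- apply: le_trans (ler_norm_sum _ _ _) _.
  rewrite -card_inj mulr_sumr; apply: ler_sum => a _; rewrite mulr1; exact: hB.
- apply: le_trans (ler_norm_sum _ _ _) _.
  have -> : n%:R ^+ k - (n ^_ k)%:R = \sum_(a : {ffun 'I_k -> 'I_n} | ~~ injectiveb a) (1 : R).
    by rewrite h1 addrC addKr.
  rewrite mulr_sumr; apply: ler_sum => a _; rewrite mulr1; exact: hB.
- exact: inj_ratio.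
Qed.

Lemma approx (R : realType) k (mu : bstr k -> R) (d : R) :
  (forall s, 0 <= mu s) -> \sum_s mu s = 1 -> 0 < d ->
  exists C : bstr k -> nat, [/\ (forall s, (0 < C s)%N -> mu s != 0),
     (0 < \sum_s C s)%N &
     \sum_s `|(C s)%:R / (\sum_t C t)%:R - mu s| <= d].
Proof.
move=> mu0 mu1 d0.
set K : R := \sum_(s : bstr k) 1.
have K0 : 0 <= K by apply: sumr_ge0.
set N := (Num.truncn (2 * K / d + K)).+1.
have hN : 2 * K / d + K < N%:R by apply: truncnS_gt.
have hN2 : 2 * K / d < N%:R - K by lra.
have Nd : 2 * K / N%:R <= d.
  have N0 : 0 < N%:R :> R by rewrite ltr0n.
  rewrite ler_pdivrMr // -ler_pdivrMl // mulrC; apply: ltW; lra.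
exists (fun s => Num.truncn (N%:R * mu s)).
set C := fun s => Num.truncn (N%:R * mu s).
have hC s : (C s)%:R <= N%:R * mu s < (C s)%:R + 1.
  have := truncn_itv (mulr_ge0 (ler0n _ N) (mu0 s)); by rewrite -/(C s) natr1.
set M : R := (\sum_t C t)%:R.
have hM : M = \sum_t (C t)%:R by rewrite /M natr_sum.
have hsumN : \sum_t N%:R * mu t = N%:R by rewrite -mulr_sumr mu1 mulr1.
have hE1 : N%:R - M <= K.
  rewrite hM -hsumN -sumrB; apply: ler_sum => t _.
  by case/andP: (hC t) => _ h; lra.
have hE0 : M <= N%:R.
  rewrite hM -hsumN; apply: ler_sum => t _; by case/andP: (hC t) => h _.
have hKd : 0 <= 2 * K / d by apply: divr_ge0; [lra|apply: ltW].
have M0 : 0 < M by lra.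
split.
- move=> s; rewrite truncn_gt0 => h; apply/eqP => hs; move: h; by rewrite hs mulr0 ler10.
- by rewrite -(ltr0n R).
rewrite -/M.
have N0 : 0 < N%:R :> R by lra.
apply: le_trans (_ : \sum_s ((C s)%:R * (M^-1 - N%:R^-1) + (N%:R * mu s - (C s)%:R) / N%:R) <= _).
  apply: ler_sum => s _.
  have -> : (C s)%:R / M - mu s = (C s)%:R * (M^-1 - N%:R^-1) - (N%:R * mu s - (C s)%:R) / N%:R.
    by field; rewrite !gt_eqF.
  apply: le_trans (ler_normB _ _) _.
  rewrite !ger0_norm //.
  all: try (apply: mulr_ge0 => //; rewrite subr_ge0 lef_pV2 ?posrE //; fail).
  by apply: divr_ge0; [case/andP: (hC s) => h _; rewrite subr_ge0|apply: ltW].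
rewrite big_split /= -mulr_suml -mulr_suml -hM sumrB hsumN -hM.
apply: le_trans Nd.
have -> : M * (M^-1 - N%:R^-1) + (N%:R - M) / N%:R = 2 * (N%:R - M) / N%:R.
  by field; rewrite !gt_eqF.
by rewrite ler_pdivrMr // divfK ?gt_eqF //; lra.
Qed.

Lemma exists_max (R : realType) (T : finType) (x0 : T) (f : T -> R) :
  exists v, is_max_fin f v.
Proof.
case: (@arg_maxP _ _ T x0 predT f isT) => i _ h.
by exists (f i); split; [exists i|move=> x; apply: h].
Qed.

Section Inst.
Variables (R : realType) (k n : nat) (C : bstr k -> nat).
Let ss := flatten [seq nseq (C s) s | s <- enum (bstr k)].
Let ia := [seq a <- enum {ffun 'I_k -> 'I_n} | injectiveb (a : {ffun 'I_k -> 'I_n})].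
Definition cs := [seq (s, a) | s <- ss, a <- ia].

Lemma sum_cs (dflt : bstr k * {ffun 'I_k -> 'I_n}) (F : bstr k * {ffun 'I_k -> 'I_n} -> R) :
  \sum_(j < size cs) F (nth dflt cs j) =
  \sum_s (C s)%:R * \sum_(a : {ffun 'I_k -> 'I_n} | injectiveb a) F (s, a).
Proof.
transitivity (\sum_(c <- cs) F c); first by rewrite (big_nth dflt) big_mkord.
rewrite big_allpairs big_flatten big_map /= big_enum /=; apply: eq_bigr => s _.
rewrite big_nseq iter_addr_0 mulr_natl; congr (_ *+ _).
by rewrite /ia big_filter big_enum_cond /=.
Qed.

Lemma cs_inj (dflt : bstr k * {ffun 'I_k -> 'I_n}) (j : 'I_(size cs)) :
  injective (nth dflt cs j).2.
Proof.
have := mem_nth dflt (ltn_ord j); case/allpairsP => [[s a] [_ /= ha ->]] /=.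
by move: ha; rewrite mem_filter => /andP[/injectiveP].
Qed.
End Inst.

Lemma frac_cs (R : realType) k n (C : bstr k -> nat) dflt (F : bstr k -> R) x :
  frac_val F (fun j : 'I_(size (cs n C)) => (nth dflt (cs n C) j).2)
             (fun j : 'I_(size (cs n C)) => (nth dflt (cs n C) j).1) x =
  (size (cs n C))%:R^-1 * \sum_s (C s)%:R *
     \sum_(a : {ffun 'I_k -> 'I_n} | injectiveb a) F (lit a s x).
Proof.
by rewrite /frac_val (sum_cs C dflt (fun c => F (lit c.2 c.1 x))).
Qed.

Lemma dir2 (R : realType) k (P : bstr k -> bool) (Q : bstr k -> R) :
  (exists mu, prob_on P mu /\ Opt_is Q mu (EQ Q)) -> useless P Q.
Proof.
case=> mu [[mu0 mu1 musupp] [_ hopt]] eps eps0.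
set B := \sum_y `|Q y|.
have B0 : 0 <= B by apply: sumr_ge0.
set d := eps / (2 * (B + 1)).
have d0 : 0 < d by apply: divr_gt0 => //; lra.
case: (approx mu0 mu1 d0) => C [hCP hM hCd].
set M : R := (\sum_t C t)%:R.
have M0 : 0 < M by rewrite ltr0n.
set n := (Num.truncn (4 * (B + 1) * (k * k)%:R / eps) + k).+1.
have n0 : (0 < n)%N by [].
have kn : (k <= n)%N by rewrite /n; apply: leq_trans (leq_addl _ k) (leqnSn _).
have hr : 2 * B * ((k * k)%:R / n%:R) <= eps / 2.
  have hn : 4 * (B + 1) * (k * k)%:R / eps < n%:R.
    apply: lt_le_trans (truncnS_gt _) _; rewrite ler_nat /n ltnS; exact: leq_addr.
  have nR : 0 < n%:R :> R by rewrite ltr0n.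
  have kk0 : 0 <= (k * k)%:R :> R by [].
  rewrite ltr_pdivrMr // in hn.
  rewrite mulrA ler_pdivrMr //.
  have : 2 * B * (k * k)%:R * 4 * (B + 1) <= eps / 2 * n%:R * 4 * (B + 1).
    nra.
  have hB1 : 0 < 4 * (B + 1) by lra.
  move=> h; rewrite -(ler_pM2r hB1) !mulrA; exact: h.
set x0 : bstr k := [ffun _ => false].
set a0 : {ffun 'I_k -> 'I_n} := [ffun _ => Ordinal n0].
set dflt := (x0, a0).
set m := size (cs n C).
set I : R := (n ^_ k)%:R.
have I0 : 0 < I by rewrite ltr0n ffact_gt0.
have hm : m%:R = M * I.
  have := sum_cs C dflt (fun _ => 1 : R).
  rewrite sumr_const card_ord card_inj => ->.
  by rewrite /M natr_sum mulr_suml.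
have m0 : (0 < m)%N by rewrite -(ltr0n R) hm mulr_gt0.
have m0' : 0 < m%:R :> R by rewrite ltr0n.
exists n, m, (fun j : 'I_m => (nth dflt (cs n C) j).2),
   (fun j : 'I_m => (nth dflt (cs n C) j).1).
split => //.
- move=> j; exact: cs_inj.
- split.
    exists [ffun _ => false]; rewrite frac_cs.
    have hl (a : {ffun 'I_k -> 'I_n}) (s : bstr k) : lit a s [ffun _ : 'I_n => false] = s.
      by apply/ffunP => i; rewrite !ffunE addbF.
    have -> : \sum_s (C s)%:R * \sum_(a : {ffun 'I_k -> 'I_n} | injectiveb a)
        ((P (lit a s [ffun _ : 'I_n => false]))%:R : R) = M * I.
      rewrite /M natr_sum mulr_suml; apply: eq_bigr => s _.
      under eq_bigr do rewrite hl.
      case: (posnP (C s)) => [->|cpos]; first by rewrite !mul0r.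
      by rewrite (musupp s (hCP s cpos)) card_inj.
    by rewrite -hm mulVf // gt_eqF.
  move=> x; rewrite frac_cs mulrC ler_pdivrMr // mul1r hm /M natr_sum mulr_suml.
  apply: ler_sum => s _; apply: ler_wpM2l => //.
  rewrite /I -card_inj; apply: ler_sum => a _; by rewrite lern1 leq_b1.
case: (exists_max [ffun _ : 'I_n => false] (frac_val Q (fun j : 'I_m => (nth dflt (cs n C) j).2)
   (fun j : 'I_m => (nth dflt (cs n C) j).1))) => v hv.
exists v; split => //; case: hv => [[x <-] _].
rewrite frac_cs.
pose p : R := n%:R^-1 * \sum_v (x v)%:R.
have hp : 0 <= p <= 1.
  have nR : 0 < n%:R :> R by rewrite ltr0n.
  apply/andP; split; first by apply: mulr_ge0; [rewrite invr_ge0 ltW|apply: sumr_ge0].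
  rewrite /p mulrC ler_pdivrMr // mul1r.
  have -> : n%:R = \sum_(w < n) (1 : R) by rewrite sumr_const card_ord.
  apply: ler_sum => w _; by rewrite lern1 leq_b1.
set c := 2 * B * ((k * k)%:R / n%:R).
apply: le_trans (_ : m%:R^-1 * \sum_s (C s)%:R * (I * (Gs Q p s + c)) <= _).
  apply: ler_wpM2l; first by rewrite invr_ge0 ltW.
  apply: ler_sum => s _; apply: ler_wpM2l => //; exact: inj_bound.
have e1 : \sum_s (C s)%:R * (I * (Gs Q p s + c)) =
    I * (\sum_s (C s)%:R * Gs Q p s) + I * c * M.
  rewrite /M natr_sum !mulr_sumr -big_split /=; apply: eq_bigr => s _; ring.
rewrite e1 hm.
set S := \sum_s (C s)%:R * Gs Q p s.
have e2 : (M * I)^-1 * (I * S + I * c * M) = S / M + c.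
  by field; rewrite !gt_eqF.
rewrite e2.
have hS : S / M <= \sum_s mu s * Gs Q p s + d * B.
  suff : S / M - \sum_s mu s * Gs Q p s <= d * B by lra.
  have -> : S / M - \sum_s mu s * Gs Q p s = \sum_s ((C s)%:R / M - mu s) * Gs Q p s.
    rewrite /S mulr_suml -sumrB; apply: eq_bigr => s _; ring.
  apply: le_trans (_ : \sum_s `|(C s)%:R / M - mu s| * B <= _); last first.
    by rewrite -mulr_suml ler_wpM2r.
  apply: ler_sum => s _; apply: le_trans (ler_norm _) _.
  rewrite normrM; apply: ler_wpM2l => //; exact: Gs_abs.
have hE : \sum_s mu s * Gs Q p s <= EQ Q by rewrite -E_noisyE; apply: hopt.
have hdB : d * B <= eps / 2.
  rewrite /d mulrAC ler_pdivrMr; last by lra.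
  nra.
have hc : c <= eps / 2 by exact: hr.
lra.
Qed.

Lemma prod_pick (R : realType) k n (a : 'I_k -> 'I_n) (F : 'I_k -> R) : injective a ->
  \prod_(v : 'I_n) (if [pick i | a i == v] is Some i then F i else 1) = \prod_i F i.
Proof.
move=> ai.
rewrite (bigID (mem [set a i | i in [set: 'I_k]])) /=.
rewrite [X in _ * X]big1 ?mulr1; last first.
  move=> v hv; case: pickP => // i /eqP hi; exfalso; move/negP: hv; apply.
  by apply/imsetP; exists i; rewrite ?inE.
rewrite big_imset /=; last by move=> i j _ _; apply: ai.
rewrite (eq_bigl predT); last by move=> i; rewrite inE.
apply: eq_bigr => i _.
case: pickP => [j /eqP/ai -> //| h]; by have := h i; rewrite eqxx.
Qed.

Lemma marg (R : realType) k n (a : 'I_k -> 'I_n) (g : 'I_n -> bool -> R) (c : 'I_k -> bool) :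
  injective a -> (forall v, g v true + g v false = 1) ->
  \sum_(z : {ffun 'I_n -> bool}) (\prod_v g v (z v)) * \prod_i (z (a i) == c i)%:R
  = \prod_i g (a i) (c i).
Proof.
move=> ai hg.
pose h v t := if [pick i | a i == v] is Some i then (t == c i)%:R else 1 : R.
have e1 (z : {ffun 'I_n -> bool}) : \prod_i (z (a i) == c i)%:R = \prod_v h v (z v) :> R.
  rewrite -(prod_pick (fun i => (z (a i) == c i)%:R : R) ai); apply: eq_bigr => v _.
  by rewrite /h; case: pickP => // i /eqP ->.
rewrite (eq_bigr (fun z : {ffun 'I_n -> bool} => \prod_v (g v (z v) * h v (z v)))); last by move=> z _; rewrite e1 -big_split.
rewrite (sum_prod_ffun (fun v t => g v t * h v t)).
rewrite -(prod_pick (fun i => g (a i) (c i)) ai); apply: eq_bigr => v _.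
rewrite /h; case: pickP => [i /eqP hi|_].
  rewrite big_bool; case: (c i) => /=; rewrite hi ?mulr1 ?mulr0 ?addr0 ?add0r //.
by rewrite big_bool /= !mulr1 hg.
Qed.

Definition piw (R : realType) n (xs : {ffun 'I_n -> bool}) (p : R) (x : {ffun 'I_n -> bool}) : R :=
  \prod_v (if x v == xs v then 1 - p else p).

Lemma avg_constraint (R : realType) k n (Q : bstr k -> R) (a : 'I_k -> 'I_n) (b : 'I_k -> bool)
  (xs : {ffun 'I_n -> bool}) (p : R) : injective a ->
  \sum_x piw xs p x * Q (lit a b x) = Gs Q p (lit a b xs).
Proof.
move=> ai.
pose g (v : 'I_n) (t : bool) := if t == xs v then 1 - p else p.
have hg v : g v true + g v false = 1.
  by rewrite /g; case: (xs v) => /=; rewrite ?subrK // addrC subrK.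
transitivity (\sum_(y : bstr k) Q y * \sum_(x : {ffun 'I_n -> bool})
     (\prod_v g v (x v)) * \prod_i (x (a i) == b i (+) y i)%:R).
  symmetry; under eq_bigr do rewrite mulr_sumr.
  rewrite exchange_big /=; apply: eq_bigr => x _.
  rewrite -(sum_ind (lit a b x) Q) mulr_sumr; apply: eq_bigr => y _.
  rewrite eq_ind_prod /piw /g.
  have -> : \prod_i (x (a i) == b i (+) y i)%:R = \prod_i ((lit a b x) i == y i)%:R :> R.
    apply: eq_bigr => i _; rewrite /lit ffunE.
    by case: (b i); case: (x (a i)); case: (y i).
  by rewrite mulrC -mulrA.
rewrite /Gs; apply: eq_bigr => y _.
rewrite (@marg R k n a g (fun i => b i (+) y i) ai hg) mulrC; congr (_ * _).
rewrite /Kp; apply: eq_bigr => i _; rewrite /g /lit ffunE.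
by case: (b i); case: (xs (a i)); case: (y i).
Qed.

Lemma piw_sum1 (R : realType) n (xs : {ffun 'I_n -> bool}) (p : R) :
  \sum_x piw xs p x = 1.
Proof.
rewrite /piw (sum_prod_ffun (fun v t => if t == xs v then 1 - p else p)).
by rewrite big1 // => v _; rewrite big_bool; case: (xs v) => /=; rewrite ?subrK // addrC subrK.
Qed.

Lemma piw_ge0 (R : realType) n (xs : {ffun 'I_n -> bool}) (p : R) x :
  0 <= p <= 1 -> 0 <= piw xs p x.
Proof.
move=> /andP[p0 p1]; apply: prodr_ge0 => v _; case: ifP => // _; by rewrite subr_ge0.
Qed.

Lemma inst_to_mu (R : realType) k (P : bstr k -> bool) (Q : bstr k -> R) n m
  (a : 'I_m -> 'I_k -> 'I_n) (b : 'I_m -> 'I_k -> bool) (xs : {ffun 'I_n -> bool}) (v : R) :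
  (0 < m)%N -> (forall j, injective (a j)) ->
  frac_val (fun s => (P s)%:R : R) a b xs = 1 ->
  (forall x, frac_val Q a b x <= v) ->
  prob_on P (fun s => m%:R^-1 * \sum_j (lit (a j) (b j) xs == s)%:R : R) /\
  (forall p, 0 <= p <= 1 ->
     E_noisy Q (fun s => m%:R^-1 * \sum_j (lit (a j) (b j) xs == s)%:R : R) p <= v).
Proof.
move=> m0 hinj hxs hv.
have m0' : 0 < m%:R :> R by rewrite ltr0n.
have hsum1 (z : bstr k) : \sum_(s : bstr k) (z == s)%:R = 1 :> R.
  by have := sum_ind z (fun _ => 1 : R); under eq_bigr do rewrite mulr1.
have allP j : P (lit (a j) (b j) xs).
  have hS : \sum_(j < m) (1 - (P (lit (a j) (b j) xs))%:R) = 0 :> R.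
    rewrite sumrB sumr_const card_ord.
    move: hxs; rewrite /frac_val => h.
    have -> : \sum_(j < m) ((P (lit (a j) (b j) xs))%:R : R) = m%:R.
      by rewrite -[LHS](mulVKf (lt0r_neq0 m0')) h mulr1.
    by rewrite subrr.
  have h0 : forall i : 'I_m, true -> 0 <= 1 - (P (lit (a i) (b i) xs))%:R :> R.
    by move=> i _; case: (P _); rewrite /= ?subrr ?subr0.
  have := @psumr_eq0P _ _ _ _ h0 hS j isT.
  by case: (P _) => //=; rewrite subr0 => /eqP; rewrite oner_eq0.
split; first split.
- move=> s; apply: mulr_ge0; [by rewrite invr_ge0 ltW|exact: sumr_ge0].
- rewrite -mulr_sumr exchange_big /=.
  under eq_bigr do rewrite hsum1.
  by rewrite sumr_const card_ord mulVf // gt_eqF.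
- move=> s hs; case: (pickP (fun j => lit (a j) (b j) xs == s)) => [j /eqP <-|h]; first exact: allP.
  by move: hs; rewrite big1 ?mulr0 ?eqxx // => j _; rewrite (h j).
move=> p hp.
rewrite E_noisyE.
have -> : \sum_s m%:R^-1 * (\sum_j (lit (a j) (b j) xs == s)%:R) * Gs Q p s =
    \sum_x piw xs p x * frac_val Q a b x.
  transitivity (m%:R^-1 * \sum_j Gs Q p (lit (a j) (b j) xs)).
    transitivity (m%:R^-1 * \sum_s \sum_j (lit (a j) (b j) xs == s)%:R * Gs Q p s).
      by rewrite mulr_sumr; apply: eq_bigr => s _; rewrite -mulrA mulr_suml.
    by rewrite exchange_big /=; congr (_ * _); apply: eq_bigr => j _; rewrite sum_ind.
  rewrite (eq_bigr (fun j => \sum_x piw xs p x * Q (lit (a j) (b j) x))); last first.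
    by move=> j _; rewrite avg_constraint.
  rewrite exchange_big /= mulr_sumr; apply: eq_bigr => x _.
  by rewrite /frac_val mulrCA -mulr_sumr.
apply: le_trans (_ : \sum_x piw xs p x * v <= _).
  apply: ler_sum => x _; apply: ler_wpM2l; [exact: piw_ge0|exact: hv].
by rewrite -mulr_suml piw_sum1 mul1r.
Qed.

Section DirOne.
Local Open Scope classical_set_scope.
Import ArrowAsProduct.
Import numFieldNormedType.Exports.

Lemma dir1 (R : realType) k (P : bstr k -> bool) (Q : bstr k -> R) :
  useless P Q -> exists mu, prob_on P mu /\ Opt_is Q mu (EQ Q).
Proof.
move=> hu.
have step (N : nat) : exists mu : bstr k -> R, prob_on P mu /\
    forall p, 0 <= p <= 1 -> E_noisy Q mu p <= EQ Q + N.+1%:R^-1.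
  have e0 : 0 < N.+1%:R^-1 :> R by rewrite invr_gt0 ltr0n.
  case: (hu _ e0) => n [m [a [b [m0 hinj [[xs hxs] _] [v [[_ hv] hvle]]]]]].
  case: (@inst_to_mu R k P Q n m a b xs v m0 hinj hxs hv) => h1 h2.
  eexists; split; first exact: h1.
  by move=> p hp; apply: le_trans (h2 p hp) hvle.
case: (choice step) => muN hmuN.
have hc := @tychonoff (bstr k) (fun _ => _) _ (fun _ => @segment_compact R 0 1).
case: (hc (muN @ \oo)).
  exists 0%N => // N _ s; case: (hmuN N) => [[h0 h1 _] _].
  rewrite /= in_itv /= h0 /= -h1; exact: term_le_sum.
move=> mu [_ hcl].
have close (e : R) (N0 : nat) : 0 < e -> exists N, (N0 <= N)%N /\ forall s, `|muN N s - mu s| < e.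
  move=> e0.
  have hB : \forall g \near mu, forall s, `|g s - mu s| < e.
    have hF : Filter (nbhs mu) by apply: nbhs_filter.
    have H := @filter_forall _ (bstr k) (fun s g => `|g s - mu s| < e) (nbhs mu) hF.
    apply: H => s.
    have hp := @proj_continuous _ _ s mu.
    have hb := nbhsx_ballx (mu s : R) e e0.
    have H2 := hp _ hb.
    suff E : proj s @^-1` ball (mu s : R) e = (fun x => `|x s - mu s| < e).
      have H3 : nbhs mu (proj s @^-1` ball (mu s : R) e) := H2.
      rewrite E in H3; exact: H3.
    apply/funext => g /=; apply/propext.
    by rewrite /proj -ball_normE /ball_ /= distrC.
  case: (hcl [set f | exists N, (N0 <= N)%N /\ f = muN N] _ _ hB) => [|f [[N [hN ->]] hf]]; last by exists N.
  by exists N0 => // N /= hN; exists N.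
set K : R := \sum_(s : bstr k) 1.
have K0 : 0 <= K by apply: sumr_ge0.
have key (W : bstr k -> R) (Wb d : R) (N0 : nat) : 0 <= Wb -> (forall s, `|W s| <= Wb) -> 0 < d ->
    exists N, (N0 <= N)%N /\ `|\sum_s mu s * W s - \sum_s muN N s * W s| <= d.
  move=> Wb0 hW d0.
  have hKW : 0 < K * Wb + 1 by have := mulr_ge0 K0 Wb0; lra.
  have e0 : 0 < d / (K * Wb + 1) by apply: divr_gt0.
  case: (close _ N0 e0) => N [hN hcl2]; exists N; split; first exact: hN.
  rewrite -sumrB.
  apply: le_trans (ler_norm_sum _ _ _) _.
  apply: le_trans (_ : \sum_(s : bstr k) d / (K * Wb + 1) * Wb <= _).
    apply: ler_sum => s _; rewrite -mulrBl normrM.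
    apply: ler_pM => //; last by apply: ltW; rewrite distrC; apply: hcl2.
  rewrite sumr_const -mulr_natl.
  have -> : (#|bstr k|%:R : R) = K by rewrite /K sumr_const.
  have -> : K * (d / (K * Wb + 1) * Wb) = (d * (K * Wb)) / (K * Wb + 1) by field; rewrite gt_eqF.
  rewrite ler_pdivrMr //.
  have := mulr_ge0 K0 Wb0; have := ltW d0; nra.
have nonneg s : 0 <= (mu : bstr k -> R) s.
  rewrite leNgt; apply/negP => hneg.
  have e0 : 0 < - mu s by rewrite oppr_gt0.
  case: (close _ 0%N e0) => N [_ hN]; have := hN s.
  case: (hmuN N) => [[h0 _ _] _]; have := h0 s.
  have := ler_norm (muN N s - mu s); lra.
have sum1 : \sum_s (mu : bstr k -> R) s = 1.
  have H d : 0 < d -> `|\sum_s mu s - 1| <= d.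
    move=> d0; case: (key (fun _ => 1) 1 d 0%N ler01 _ d0) => [s|N [_ hN]]; first by rewrite normr1.
    case: (hmuN N) => [[_ h1 _] _].
    by move: hN; under eq_bigr do rewrite mulr1; under [X in _ - X]eq_bigr do rewrite mulr1; rewrite h1.
  apply/eqP; rewrite eq_le; apply/andP; split; apply/ler_addgt0Pr => d d0;
    have := H d d0; have := ler_norm (\sum_s mu s - 1); have := ler_norm (- (\sum_s mu s - 1));
    rewrite normrN; lra.
exists mu; split; first split => //.
  move=> s hs.
  have e0 : 0 < `|mu s| by rewrite normr_gt0.
  case: (close _ 0%N e0) => N [_ hN].
  case: (hmuN N) => [[_ _ hsupp] _]; apply: hsupp.
  apply/eqP => h0; have := hN s; rewrite h0 sub0r normrN ltxx //.
split.
  exists 2^-1; split; last exact: Opt_half.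
  apply/andP; split; first by rewrite invr_ge0 ler0n.
  by rewrite invf_le1 ?ltr0n // ler1n.
move=> p hp; apply/ler_addgt0Pr => d d0.
set B := \sum_y `|Q y|.
have B0 : 0 <= B by apply: sumr_ge0.
have d20 : 0 < d / 2 by apply: divr_gt0.
case: (key (Gs Q p) B (d / 2) (Num.truncn (2 / d)) B0 (fun s => Gs_abs Q s hp) d20) => N [hN hk].
case: (hmuN N) => [_ hE].
have hN1 : N.+1%:R^-1 <= d / 2 :> R.
  have h1 : 2 / d < N.+1%:R.
    apply: lt_le_trans (truncnS_gt _) _; by rewrite ler_nat ltnS.
  rewrite ltr_pdivrMr // in h1.
  rewrite -[_^-1]mul1r ler_pdivrMr ?ltr0n //.
  nra.
have := hE p hp; rewrite !E_noisyE.
have := ler_norm (\sum_s mu s * Gs Q p s - \sum_s muN N s * Gs Q p s).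
move=> h1 h2; have h3 := le_trans h1 hk.
move: h3 h2; set X := \sum_s mu s * _; set Y := \sum_s muN N s * _.
move=> h3 h2.
have h4 : X <= Y + d / 2 by rewrite -lerBlDl.
apply: le_trans h4 _.
apply: le_trans (lerD h2 (lexx (d / 2))) _.
rewrite -addrA lerD2l; apply: le_trans (lerD hN1 (lexx _)) _.
by rewrite -splitr.
Qed.

End DirOne.

Unset Implicit Arguments.

Theorem theorem3p2 (R : realType) (k : nat) (P : bstr k -> bool) (Q : bstr k -> R) :
  useless P Q <->
  exists mu : bstr k -> R, prob_on P mu /\ Opt_is Q mu (EQ Q).
Proof.
split; [exact: dir1 | exact: dir2].
Qed.
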